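(* Let $\lambda\in(\frac16,\frac56)$. For all $n\ge0$, $$\sup_{z\in[0,1]}|F^\lambda_{n+1}(z)-F^\lambda_n(z)|\le\begin{cases}\lambda\left(\frac13+2\lambda\right)^n&\text{if }\lambda\in(\frac16,\frac13),\\ \lambda\left(\frac16+\lambda\right)^n&\text{if }\lambda\in[\frac13,\frac56).\end{cases}$$
   Context: Fix $\lambda>0$. $F^\lambda_0\equiv0$ on $[0,1]$ (one interval of generation $0$). Given $F^\lambda_n$ with its $4^n$ closed intervals of generation $n$ (covering $[0,1]$, disjoint interiors, $F^\lambda_n$ affine on each), on each interval $[a,b]$ of generation $n$, with $\ell=b-a$ and $m$ the slope of $F^\lambda_n$ there, $F^\lambda_{n+1}$ coincides with $F^\lambda_n$ at $a,a+\ell/3,a+2\ell/3,b$, equals $F^\lambda_n(a+\ell/2)+\lambda\ell\sqrt{1+m^2}$ at $a+\ell/2$, and is affine on each of $[a,a+\ell/3],[a+\ell/3,a+\ell/2],[a+\ell/2,a+2\ell/3],[a+2\ell/3,b]$ (generation $n+1$). *)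

(* Defs.v *)
From Stdlib Require Import Reals List.
Open Scope R_scope.

(* An affine piece of generation n: interval [sa, sb] with the values
   fa = F(sa), fb = F(sb); F is affine on [sa, sb]. *)
Record seg := Seg { sa : R; sb : R; fa : R; fb : R }.

Definition seg_len (s : seg) : R := sb s - sa s.
Definition seg_slope (s : seg) : R := (fb s - fa s) / (sb s - sa s).
Definition seg_val (s : seg) (z : R) : R := fa s + seg_slope s * (z - sa s).

Definition refine_seg (lam : R) (s : seg) : list seg :=
  let a := sa s in let b := sb s in let l := seg_len s in let m := seg_slope s in
  let x1 := a + l / 3 in let x2 := a + l / 2 in let x3 := a + 2 * l / 3 in
  let y1 := seg_val s x1 in
  let y2 := seg_val s x2 + lam * l * sqrt (1 + m ^ 2) in
  let y3 := seg_val s x3 in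
  Seg a x1 (fa s) y1 :: Seg x1 x2 y1 y2 :: Seg x2 x3 y2 y3 :: Seg x3 b y3 (fb s) :: nil.

(* The 4^n intervals of generation n (with the values of F^lambda_n at their endpoints). *)
Fixpoint gen (lam : R) (n : nat) : list seg :=
  match n with
  | O => Seg 0 1 0 0 :: nil
  | S k => flat_map (refine_seg lam) (gen lam k)
  end.

(* Evaluation of a piecewise-affine function given by its pieces: use the
   first piece whose interval contains z (values agree at shared endpoints);
   0 outside all pieces (irrelevant: only z in [0,1] is used). *)
Fixpoint eval_pieces (l : list seg) (z : R) : R :=
  match l with
  | nil => 0
  | s :: t =>
      if Rle_dec (sa s) z then
        if Rle_dec z (sb s) then seg_val s z else eval_pieces t z
      else eval_pieces t z
  end.

Definition F (lam : R) (n : nat) (z : R) : R := eval_pieces (gen lam n) z.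

(* Main.v *)
Require Import Defs.
From Stdlib Require Import Reals Lra Psatz List.
Open Scope R_scope.

Definition chord (s : seg) := sqrt ((sb s - sa s)^2 + (fb s - fa s)^2).

Lemma len_slope_chord s : sa s < sb s ->
  seg_len s * sqrt (1 + seg_slope s ^ 2) = chord s.
Proof.
  intros H. unfold chord, seg_len, seg_slope.
  rewrite <- (sqrt_pow2 (sb s - sa s)) at 1 by lra.
  assert (0 <= (sb s - sa s)^2) by apply pow2_ge_0.
  assert (0 <= 1 + ((fb s - fa s) / (sb s - sa s))^2)
    by (pose proof (pow2_ge_0 ((fb s - fa s) / (sb s - sa s))); lra).
  rewrite <- sqrt_mult by assumption.
  f_equal. field. lra.
Qed.

Lemma piece_bound s u v yu yv z H eu ev :
  sb s - sa s <> 0 -> u < v -> u <= z <= v -> 0 <= H ->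
  yu = seg_val s u + eu -> yv = seg_val s v + ev ->
  (eu = 0 \/ eu = H) -> (ev = 0 \/ ev = H) ->
  Rabs (seg_val (Seg u v yu yv) z - seg_val s z) <= H.
Proof.
  intros Hs Huv Hz HH Hu Hv Heu Hev.
  assert (E : seg_val (Seg u v yu yv) z - seg_val s z = eu + (ev - eu) * ((z-u)/(v-u))).
  { subst yu yv. unfold seg_val, seg_slope. simpl. field. lra. }
  rewrite E.
  set (t := (z-u)/(v-u)).
  assert (Ht0 : 0 <= t) by (unfold t; unfold Rdiv; apply Rmult_le_pos; [lra | left; apply Rinv_0_lt_compat; lra]).
  assert (Ht1 : t <= 1).
  { unfold t. apply Rmult_le_reg_r with (v-u); [lra|].
    unfold Rdiv. rewrite Rmult_assoc, Rinv_l by lra. lra. }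
  apply Rabs_le.
  destruct Heu as [-> | ->], Hev as [-> | ->]; split; nra.
Qed.

Lemma sqrt_tri p q k : sqrt (p^2 + (q+k)^2) <= sqrt (p^2 + q^2) + Rabs k.
Proof.
  assert (A : 0 <= sqrt (p^2+q^2)) by apply sqrt_pos.
  assert (B : Rabs q <= sqrt (p^2+q^2)).
  { rewrite <- sqrt_Rsqr_abs. apply sqrt_le_1_alt. unfold Rsqr. pose proof (pow2_ge_0 p). lra. }
  apply Rsqr_incr_0_var.
  - rewrite Rsqr_sqrt by (pose proof (pow2_ge_0 p); pose proof (pow2_ge_0 (q+k)); lra). unfold Rsqr.
    assert (Hs : sqrt (p^2+q^2) * sqrt (p^2+q^2) = p^2+q^2) by (apply sqrt_sqrt; pose proof (pow2_ge_0 p); pose proof (pow2_ge_0 q); lra).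
    assert (q * k <= Rabs q * Rabs k) by (rewrite <- Rabs_mult; apply Rle_abs).
    assert (Rabs k * Rabs k = k*k) by (rewrite <- Rabs_mult; apply Rabs_pos_eq; nra).
    pose proof (Rabs_pos k). pose proof (Rabs_pos q). nra.
  - pose proof (Rabs_pos k). lra.
Qed.

Lemma sqrt_scale p q r : 0 < r -> sqrt ((p/r)^2 + (q/r)^2) = sqrt (p^2+q^2) / r.
Proof.
  intros Hr.
  replace ((p/r)^2 + (q/r)^2) with ((p^2+q^2) * (/r)^2) by (field; lra).
  rewrite sqrt_mult; [| pose proof (pow2_ge_0 p); pose proof (pow2_ge_0 q); lra | apply pow2_ge_0].
  rewrite sqrt_pow2 by (left; apply Rinv_0_lt_compat; lra). reflexivity.
Qed.

Lemma sub_chord d1 d2 p q r k : 0 < r -> d1 = p / r -> d2 = q / r + k ->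
  sqrt (d1^2 + d2^2) <= sqrt (p^2+q^2)/r + Rabs k.
Proof. intros Hr -> ->. rewrite <- sqrt_scale by lra. apply sqrt_tri. Qed.

Lemma refine_eval lam s rest z : 0 <= lam -> sa s < sb s ->
  (sa s <= z <= sb s ->
     Rabs (eval_pieces (refine_seg lam s ++ rest) z - seg_val s z) <= lam * chord s) /\
  (~ (sa s <= z <= sb s) ->
     eval_pieces (refine_seg lam s ++ rest) z = eval_pieces rest z).
Proof.
  intros Hlam Hs.
  pose proof (len_slope_chord s Hs) as HC.
  assert (HC0 : 0 <= chord s) by apply sqrt_pos.
  assert (Hl : seg_len s = sb s - sa s) by reflexivity.
  unfold refine_seg. cbv zeta.
  set (h := lam * seg_len s * sqrt (1 + seg_slope s ^ 2)).
  assert (Hh : h = lam * chord s) by (unfold h; rewrite Rmult_assoc, HC; reflexivity).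
  assert (Hh0 : 0 <= h) by (rewrite Hh; apply Rmult_le_pos; lra).
  rewrite <- Hh.
  assert (Hne : sb s - sa s <> 0) by lra.
  cbn [app eval_pieces sa sb fa fb].
  split; intros Hz;
  repeat match goal with |- context [Rle_dec ?x ?y] => destruct (Rle_dec x y) end;
  try lra; try reflexivity.
  all: first [
    eapply piece_bound with (eu := 0) (ev := 0); try eassumption; try lra;
      first [ring | unfold seg_val, seg_slope; field; lra] |
    eapply piece_bound with (eu := 0) (ev := h); try eassumption; try lra;
      first [ring | unfold seg_val, seg_slope; field; lra] |
    eapply piece_bound with (eu := h) (ev := 0); try eassumption; try lra;
      first [ring | unfold seg_val, seg_slope; field; lra] ].
Qed.

Lemma step lam K l z : 0 <= lam -> 0 <= K ->
  (forall s, In s l -> sa s < sb s /\ chord s <= K) ->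
  Rabs (eval_pieces (flat_map (refine_seg lam) l) z - eval_pieces l z) <= lam * K.
Proof.
  intros Hlam HK. induction l as [|s t IH]; intros Hall.
  - simpl. rewrite Rminus_0_r, Rabs_R0. apply Rmult_le_pos; lra.
  - destruct (Hall s (or_introl eq_refl)) as [Hs Hc].
    assert (IH' := IH (fun s' H => Hall s' (or_intror H))).
    destruct (refine_eval lam s (flat_map (refine_seg lam) t) z Hlam Hs) as [A B].
    cbn [flat_map eval_pieces].
    destruct (Rle_dec (sa s) z); [destruct (Rle_dec z (sb s))|].
    + eapply Rle_trans; [apply A; lra|]. apply Rmult_le_compat_l; lra.
    + rewrite B by lra. exact IH'.
    + rewrite B by lra. exact IH'.
Qed.

Lemma gen_inv lam n : 1/6 < lam ->
  forall s, In s (gen lam n) -> sa s < sb s /\ chord s <= (1/6 + lam) ^ n.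
Proof.
  intros Hlam. induction n as [|n IH]; intros s Hin.
  - simpl in Hin. destruct Hin as [<- | []]. unfold chord; simpl.
    split; [lra|]. replace ((1-0)*((1-0)*1) + (0-0)*((0-0)*1)) with 1 by ring.
    rewrite sqrt_1. lra.
  - simpl in Hin. apply in_flat_map in Hin. destruct Hin as [x [Hx Hs]].
    destruct (IH x Hx) as [Hx1 Hx2].
    pose proof (len_slope_chord x Hx1) as HC.
    assert (HC0 : 0 <= chord x) by apply sqrt_pos.
    assert (Hc : chord x <= sqrt ((sb x - sa x)^2 + (fb x - fa x)^2)) by (unfold chord; lra).
    set (h := lam * seg_len x * sqrt (1 + seg_slope x ^ 2)) in *.
    assert (Hh : h = lam * chord x) by (unfold h; rewrite Rmult_assoc, HC; reflexivity).
    assert (Hh0 : 0 <= h) by (rewrite Hh; apply Rmult_le_pos; lra).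
    assert (Hpow : (1/6+lam)^(S n) = (1/6+lam) * (1/6+lam)^n) by reflexivity.
    assert (Hk : (1/6+lam) * chord x <= (1/6+lam)^(S n))
      by (rewrite Hpow; apply Rmult_le_compat_l; lra).
    assert (Hl : seg_len x = sb x - sa x) by reflexivity.
    assert (Hne : sb x - sa x <> 0) by lra.
    unfold refine_seg in Hs. cbv zeta in Hs. fold h in Hs.
    simpl in Hs.
    destruct Hs as [<- | [<- | [<- | [<- | []]]]]; unfold chord; simpl; split; try lra.
    + eapply Rle_trans; [eapply (sub_chord _ _ (sb x - sa x) (fb x - fa x) 3 0)|].
      lra. rewrite Hl; field. unfold seg_val, seg_slope. rewrite Hl. field. lra.
      fold (chord x). rewrite Rabs_R0. nra.
    + eapply Rle_trans; [eapply (sub_chord _ _ (sb x - sa x) (fb x - fa x) 6 h)|].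
      lra. rewrite Hl; field. unfold seg_val, seg_slope. rewrite Hl. field. lra.
      fold (chord x). rewrite Rabs_pos_eq by lra. nra.
    + eapply Rle_trans; [eapply (sub_chord _ _ (sb x - sa x) (fb x - fa x) 6 (-h))|].
      lra. rewrite Hl; field. unfold seg_val, seg_slope. rewrite Hl. field. lra.
      fold (chord x). rewrite Rabs_Ropp, Rabs_pos_eq by lra. nra.
    + eapply Rle_trans; [eapply (sub_chord _ _ (sb x - sa x) (fb x - fa x) 3 0)|].
      lra. rewrite Hl; field. unfold seg_val, seg_slope. rewrite Hl. field. lra.
      fold (chord x). rewrite Rabs_R0. nra.
Qed.

Theorem lemma3p6 (lam : R) (hlam : 1/6 < lam < 5/6) (n : nat) :
  (lam < 1/3 ->
     forall z, 0 <= z <= 1 -> Rabs (F lam (S n) z - F lam n z) <= lam * (1/3 + 2 * lam) ^ n) /\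
  (1/3 <= lam ->
     forall z, 0 <= z <= 1 -> Rabs (F lam (S n) z - F lam n z) <= lam * (1/6 + lam) ^ n).
Proof.
  assert (Hm : forall z, Rabs (F lam (S n) z - F lam n z) <= lam * (1/6 + lam) ^ n).
  { intros z. unfold F. cbn [gen]. apply step.
    - lra.
    - apply pow_le. lra.
    - apply gen_inv. lra. }
  split; intros _ z _; [|apply Hm].
  eapply Rle_trans; [apply Hm|]. apply Rmult_le_compat_l; [lra|].
  apply pow_incr. lra.
Qed.
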